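(* In the Setting below and under the Standing Assumption, let $x\in\mathbb{Q}\cap D$ be such that the Lyapunov exponent $\lambda(x)$ exists. Then for every $\varepsilon>0$ there exists $p_0\in\mathbb{Z}$ such that for all $p\ge p_0$, $$\sigma(x,p)\le\frac{1}{\ln 2}\max(0,\bar\lambda(x))+\varepsilon.$$
   Context: Setting. $D\subseteq\mathbb{R}$ is a compact interval and $f:D\to D$ is twice continuously differentiable on $D$ with $f''$ bounded. For $x\in D$ the orbit is $x_0=x$, $x_{n+1}=f(x_n)$. A floating-point number of precision $m$ is a real $s\cdot 2^{e-m}$ with $s,e\in\mathbb{Z}$, $|s|\le 2^m-1$; $rd_m(y)$ denotes rounding of $y$ to a nearest floating-point number of precision $m$. Let $L(a,e):=\sup\{|f'(y)|: y\in[a-e,a+e]\cap D\}$ and fix a function $\bar L$ with $L(a,e)\le\bar L(a,e)\le\min(\bar L_{max},\,L(a,e)+Ke)$ for constants $\bar L_{max},K\ge0$. For $x\in\mathbb{Q}\cap D$ and precision $m\ge1$ the computed sequence is $\hat x_0=rd_m(x)$, $\bar e_0=2^{-m}|\hat x_0|$, $\hat x_{n+1}=rd_m(f(\hat x_n))$, $\bar e_{n+1}=\bar L(\hat x_n,\bar e_n)\bar e_n+2^{-m}|\hat x_{n+1}|$ (all $\hat x_n$ assumed in $D$). For $N\in\mathbb{N}$, $p\in\mathbb{Z}$, $m_{min}(x,N,p)$ is the least $m\ge1$ such that the sequence computed at precision $m$ satisfies $\bar e_n\le\frac{10^{-p}}{1+10^{-p}}|\hat x_n|$ for all $n=0,\dots,N$.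 $\sigma(x,p):=\limsup_{N\to\infty} m_{min}(x,N,p)/N$. Standing Assumption: $x_n\ne0$ for all $n$ and $\lim_{N\to\infty}\mathrm{ld}(\min\{|x_n|:0\le n\le N\})/N=0$, $\mathrm{ld}=\log_2$. Lyapunov exponent: $\lambda(x):=\lim_{n\to\infty}\frac1n\sum_{k=0}^{n-1}\ln|f'(f^k(x))|$ when it exists. For $\alpha>0$, $\eta_\alpha(y)=\ln y$ if $y\ge\alpha$, $\eta_\alpha(y)=\ln\alpha$ if $0\le y<\alpha$; $\bar\lambda_\alpha(x):=\limsup_{n\to\infty}\frac1n\sum_{k=0}^{n-1}\eta_\alpha(|f'(f^k(x))|)$ and $\bar\lambda(x):=\lim_{\alpha\to0^+}\bar\lambda_\alpha(x)$. *)

(* Defs.v *)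
From Stdlib Require Import Reals QArith Qreals ZArith.
Open Scope R_scope.

Definition inD (a b y : R) : Prop := a <= y <= b.

Definition deriv_within (a b : R) (g : R -> R) (y l : R) : Prop :=
  forall eps, 0 < eps -> exists del, 0 < del /\
    forall z, inD a b z -> z <> y -> Rabs (z - y) < del ->
      Rabs ((g z - g y) / (z - y) - l) < eps.

Definition cont_within (a b : R) (g : R -> R) (y : R) : Prop :=
  forall eps, 0 < eps -> exists del, 0 < del /\
    forall z, inD a b z -> Rabs (z - y) < del -> Rabs (g z - g y) < eps.

Definition is_float (m : nat) (y : R) : Prop :=
  exists s e : Z, (Z.abs s <= 2 ^ (Z.of_nat m) - 1)%Z /\
    y = IZR s * powerRZ 2 (e - Z.of_nat m).

Definition is_rounding (rd : nat -> R -> R) : Prop :=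
  forall m y, is_float m (rd m y) /\
    forall z, is_float m z -> Rabs (rd m y - y) <= Rabs (z - y).

(* the set { |f'(y)| : y in [c-e,c+e] /\ D }, whose sup is L(c,e) *)
Definition Lset (a b : R) (f1 : R -> R) (c e : R) : R -> Prop :=
  fun z => exists y, inD a b y /\ c - e <= y <= c + e /\ z = Rabs (f1 y).

Definition valid_Lbar (a b : R) (f1 : R -> R) (Lbar : R -> R -> R) (Lmax K : R) : Prop :=
  forall c e l, is_lub (Lset a b f1 c e) l ->
    l <= Lbar c e /\ Lbar c e <= Rmin Lmax (l + K * e).

Fixpoint comp (f : R -> R) (rd : nat -> R -> R) (Lbar : R -> R -> R)
  (m : nat) (x : R) (n : nat) : R * R :=
  match n with
  | O => let xh := rd m x in (xh, Rabs xh / 2 ^ m)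
  | S n' => let p := comp f rd Lbar m x n' in
            let xh' := rd m (f (fst p)) in
            (xh', Lbar (fst p) (snd p) * snd p + Rabs xh' / 2 ^ m)
  end.

Definition xhat f rd Lbar m x n := fst (comp f rd Lbar m x n).
Definition ebar f rd Lbar m x n := snd (comp f rd Lbar m x n).

Definition tol (p : Z) : R := powerRZ 10 (- p) / (1 + powerRZ 10 (- p)).

Definition good f rd Lbar (x : R) (N : nat) (p : Z) (m : nat) : Prop :=
  forall n, (n <= N)%nat ->
    ebar f rd Lbar m x n <= tol p * Rabs (xhat f rd Lbar m x n).

Definition is_mmin f rd Lbar (x : R) (N : nat) (p : Z) (m : nat) : Prop :=
  (1 <= m)%nat /\ good f rd Lbar x N p m /\
  forall m', (1 <= m')%nat -> (m' < m)%nat -> ~ good f rd Lbar x N p m'.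

(* sigma(x,p) = limsup_N m_min(x,N,p)/N  <=  s *)
Definition sigma_le f rd Lbar (x : R) (p : Z) (s : R) : Prop :=
  forall del, 0 < del -> exists N0 : nat, forall N, (N0 <= N)%nat ->
    exists m, is_mmin f rd Lbar x N p m /\ INR m / INR N <= s + del.

Fixpoint orbit (f : R -> R) (x : R) (n : nat) : R :=
  match n with O => x | S n' => f (orbit f x n') end.

Fixpoint minabs (f : R -> R) (x : R) (N : nat) : R :=
  match N with
  | O => Rabs x
  | S N' => Rmin (minabs f x N') (Rabs (orbit f x N))
  end.

Definition ld (y : R) : R := ln y / ln 2.

Definition standing (f : R -> R) (x : R) : Prop :=
  (forall n, orbit f x n <> 0) /\
  Un_cv (fun N => ld (minabs f x N) / INR N) 0.

Fixpoint psum (g : nat -> R) (n : nat) : R :=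
  match n with O => 0 | S n' => psum g n' + g n' end.

Definition lyap_exists (f f1 : R -> R) (x : R) : Prop :=
  (forall k, f1 (orbit f x k) <> 0) /\
  exists lam, Un_cv (fun n => psum (fun k => ln (Rabs (f1 (orbit f x k)))) n / INR n) lam.

Definition eta (alpha y : R) : R := if Rle_dec alpha y then ln y else ln alpha.

Definition is_limsup (u : nat -> R) (l : R) : Prop :=
  (forall eps, 0 < eps -> exists N, forall n, (N <= n)%nat -> u n <= l + eps) /\
  (forall eps, 0 < eps -> forall N, exists n, (N <= n)%nat /\ l - eps <= u n).

(* lb = lambdabar(x) = lim_{alpha -> 0+} lambdabar_alpha(x) *)
Definition is_lambda_bar (f f1 : R -> R) (x lb : R) : Prop :=
  exists la : R -> R,
    (forall alpha, 0 < alpha ->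
       is_limsup (fun n => psum (fun k => eta alpha (Rabs (f1 (orbit f x k)))) n / INR n)
                 (la alpha)) /\
    (forall eps, 0 < eps -> exists del, 0 < del /\
       forall alpha, 0 < alpha < del -> Rabs (la alpha - lb) < eps).

(* Main.v *)
Require Import Defs.
From Stdlib Require Import Reals QArith Qreals ZArith Lra Lia Psatz Classical ClassicalEpsilon.
Open Scope R_scope.

Definition clamp (u v y : R) := Rmax u (Rmin v y).

Lemma clamp_lip u v y z : u <= v -> Rabs (clamp u v y - clamp u v z) <= Rabs (y - z).
Proof.
  intros H; unfold clamp, Rmax, Rmin.
  repeat (destruct Rle_dec); unfold Rabs; repeat destruct Rcase_abs; lra.
Qed.

Lemma clamp_in u v y : u <= v -> u <= clamp u v y <= v.
Proof. intros; unfold clamp, Rmax, Rmin; repeat destruct Rle_dec; lra. Qed.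

Lemma clamp_id u v y : u <= y <= v -> clamp u v y = y.
Proof. intros; unfold clamp, Rmax, Rmin; repeat destruct Rle_dec; lra. Qed.

Lemma deriv_cont a b g y l : deriv_within a b g y l -> cont_within a b g y.
Proof.
  intros Hd eps Heps.
  destruct (Hd 1 Rlt_0_1) as [del [Hdel H]].
  exists (Rmin del (eps / (Rabs l + 1))). split.
  { apply Rmin_pos; auto. apply Rdiv_lt_0_compat; auto. pose proof (Rabs_pos l); lra. }
  intros z Hz Hzy.
  destruct (Req_dec z y) as [->|Hne].
  { rewrite Rminus_eq_0, Rabs_R0; auto. }
  assert (Hzy1 : Rabs (z - y) < del) by (eapply Rlt_le_trans; [apply Hzy| apply Rmin_l]).
  assert (Hzy2 : Rabs (z - y) < eps / (Rabs l + 1)) by (eapply Rlt_le_trans; [apply Hzy| apply Rmin_r]).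
  specialize (H z Hz Hne Hzy1).
  assert (Hq : Rabs ((g z - g y) / (z - y)) <= Rabs l + 1).
  { pose proof (Rabs_triang_inv ((g z - g y) / (z - y)) l). lra. }
  assert (Hzyne : z - y <> 0) by lra.
  replace (g z - g y) with ((g z - g y) / (z - y) * (z - y)) by (field; auto).
  rewrite Rabs_mult.
  assert (0 < Rabs l + 1) by (pose proof (Rabs_pos l); lra).
  apply Rle_lt_trans with ((Rabs l + 1) * Rabs (z - y)).
  { apply Rmult_le_compat_r; auto. apply Rabs_pos. }
  apply Rmult_lt_reg_l with (/ (Rabs l + 1)). { apply Rinv_0_lt_compat; lra. }
  rewrite <- Rmult_assoc, Rinv_l by lra. unfold Rdiv in Hzy2. lra.
Qed.

Lemma MVI a b g g' u v L :
  (forall y, inD a b y -> deriv_within a b g y (g' y)) ->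
  inD a b u -> inD a b v -> u <= v ->
  (forall t, u <= t <= v -> Rabs (g' t) <= L) ->
  Rabs (g v - g u) <= L * (v - u).
Proof.
  intros Hd Hu Hv Huv HL.
  destruct (Req_dec u v) as [<-|Hne].
  { rewrite !Rminus_eq_0, Rabs_R0. lra. }
  assert (Hlt : u < v) by lra.
  unfold inD in *.
  set (gt := fun y => g (clamp u v y)).
  assert (Hder : forall c, u < c < v -> derivable_pt_lim gt c (g' c)).
  { intros c Hc eps Heps.
    assert (HcD : a <= c <= b) by lra.
    destruct (Hd c HcD eps Heps) as [del [Hdel H]].
    assert (Hp : 0 < Rmin del (Rmin (c - u) (v - c))).
    { apply Rmin_pos; auto; apply Rmin_pos; lra. }
    exists (mkposreal _ Hp). intros h Hh0 Hh. simpl in Hh.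
    assert (h1 : Rabs h < del) by (eapply Rlt_le_trans; [apply Hh| apply Rmin_l]).
    assert (h2 : Rabs h < Rmin (c - u) (v - c)) by (eapply Rlt_le_trans; [apply Hh| apply Rmin_r]).
    assert (h3 : Rabs h < c - u) by (eapply Rlt_le_trans; [apply h2| apply Rmin_l]).
    assert (h4 : Rabs h < v - c) by (eapply Rlt_le_trans; [apply h2| apply Rmin_r]).
    assert (Hch : u <= c + h <= v) by (unfold Rabs in *; destruct Rcase_abs; lra).
    unfold gt. rewrite (clamp_id u v (c + h)) by auto. rewrite (clamp_id u v c) by lra.
    assert (Hne' : c + h <> c) by (intro E; apply Hh0; lra).
    specialize (H (c + h) ltac:(unfold inD; lra) Hne').
    replace (c + h - c) with h in H by ring. apply H; auto. }
  assert (Hcont : forall c, u <= c <= v -> continuity_pt gt c).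
  { intros c Hc. unfold continuity_pt, continue_in, limit1_in, limit_in. intros eps Heps.
    assert (HcD : a <= c <= b) by lra.
    destruct (deriv_cont a b g c (g' c) (Hd c HcD) eps Heps) as [del [Hdel H]].
    exists del. split; auto. intros y [_ Hy]. simpl in *. unfold R_dist in *. unfold dist in Hy; simpl in Hy; unfold R_dist in Hy.
    unfold gt. replace (g (clamp u v c)) with (g c) by (rewrite clamp_id; auto).
    apply H.
    - pose proof (clamp_in u v y); unfold inD; lra.
    - replace (clamp u v y - c) with (clamp u v y - clamp u v c) by (rewrite (clamp_id u v c); auto).
      eapply Rle_lt_trans; [apply clamp_lip; lra| auto]. }
  assert (pr1 : forall c, u < c < v -> derivable_pt gt c).
  { intros c Hc. exists (g' c). apply Hder; auto. }
  assert (pr2 : forall c, u < c < v -> derivable_pt id c).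
  { intros c Hc. apply derivable_pt_id. }
  destruct (MVT gt id u v pr1 pr2 Hlt Hcont
             (fun c _ => derivable_continuous_pt id c (derivable_pt_id c))) as [c [P HP]].
  rewrite (derive_pt_eq_0 gt c (g' c) (pr1 c P) (Hder c P)) in HP.
  rewrite (derive_pt_eq_0 id c 1 (pr2 c P) (derivable_pt_lim_id c)) in HP.
  unfold gt, id in HP. rewrite (clamp_id u v u), (clamp_id u v v) in HP by lra.
  replace (g v - g u) with ((v - u) * g' c) by lra.
  rewrite Rabs_mult, Rabs_right by lra.
  rewrite Rmult_comm. apply Rmult_le_compat_r; [lra|]. apply HL; lra.
Qed.

Lemma MVI2 a b g g' u v L :
  (forall y, inD a b y -> deriv_within a b g y (g' y)) ->
  inD a b u -> inD a b v ->
  (forall t, Rmin u v <= t <= Rmax u v -> Rabs (g' t) <= L) ->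
  Rabs (g v - g u) <= L * Rabs (v - u).
Proof.
  intros Hd Hu Hv HL.
  destruct (Rle_dec u v).
  - rewrite (Rabs_right (v - u)) by lra. apply (MVI a b g g'); auto.
    intros t Ht; apply HL. rewrite Rmin_left, Rmax_right; lra.
  - rewrite Rabs_minus_sym, (Rabs_minus_sym v u), (Rabs_right (u - v)) by lra.
    apply (MVI a b g g'); auto; try lra.
    intros t Ht; apply HL. rewrite Rmin_right, Rmax_left; lra.
Qed.

Lemma ln2_pos : 0 < ln 2.
Proof. rewrite <- ln_1. apply ln_increasing; lra. Qed.

Lemma P_exp z : powerRZ 2 z = exp (IZR z * ln 2).
Proof. rewrite powerRZ_Rpower by lra. reflexivity. Qed.

Lemma P_pos z : 0 < powerRZ 2 z.
Proof. apply powerRZ_lt; lra. Qed.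

Lemma P_add z1 z2 : powerRZ 2 (z1 + z2) = powerRZ 2 z1 * powerRZ 2 z2.
Proof. apply powerRZ_add; lra. Qed.

Lemma P_nat (m : nat) : powerRZ 2 (Z.of_nat m) = 2 ^ m.
Proof. rewrite pow_powerRZ. reflexivity. Qed.

Lemma exists_exponent y : 0 < y -> exists e : Z, powerRZ 2 (e - 1) <= y < powerRZ 2 e.
Proof.
  intros Hy. pose proof ln2_pos.
  set (r := ln y / ln 2). exists (up r).
  destruct (archimed r) as [H1 H2].
  rewrite !P_exp. rewrite <- (exp_ln y) by auto.
  assert (ln y = r * ln 2) by (unfold r; field; lra).
  rewrite H0. rewrite minus_IZR. split.
  - destruct (Req_dec (IZR (up r) - 1) r) as [E|E].
    + rewrite E; lra.
    + left. apply exp_increasing. apply Rmult_lt_compat_r; lra.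
  - apply exp_increasing. apply Rmult_lt_compat_r; lra.
Qed.

Lemma float_neg m z : is_float m z -> is_float m (- z).
Proof.
  intros [s [e [Hs ->]]]. exists (- s)%Z, e. split.
  - rewrite Z.abs_opp; auto.
  - rewrite opp_IZR; ring.
Qed.

Lemma float_pow m e : (1 <= m)%nat -> is_float m (powerRZ 2 e).
Proof.
  intros Hm. exists 1%Z, (e + Z.of_nat m)%Z. split.
  - assert (2 ^ Z.of_nat m >= 2)%Z.
    { replace (Z.of_nat m) with (1 + Z.of_nat (m - 1))%Z by lia.
      rewrite Z.pow_add_r by lia. pose proof (Z.pow_pos_nonneg 2 (Z.of_nat (m-1))). lia. }
    simpl; lia.
  - f_equal. rewrite Rmult_1_l. f_equal. lia.
Qed.

Lemma IZR_pow2 m : IZR (2 ^ Z.of_nat m) = 2 ^ m.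
Proof. rewrite <- pow_IZR. reflexivity. Qed.

Lemma near_float m t e : (1 <= m)%nat -> powerRZ 2 (e - 1) <= t < powerRZ 2 e ->
  exists z, is_float m z /\ Rabs (z - t) <= powerRZ 2 (e - 1) / 2 ^ m.
Proof.
  intros Hm [Ht1 Ht2].
  set (sp := powerRZ 2 (e - Z.of_nat m)).
  assert (Hsp : 0 < sp) by apply P_pos.
  assert (Hsp2 : powerRZ 2 e = 2 ^ m * sp).
  { unfold sp. rewrite <- P_nat, <- P_add. f_equal; lia. }
  assert (Hhalf : powerRZ 2 (e - 1) / 2 ^ m = sp / 2).
  { assert (0 < 2 ^ m) by (apply pow_lt; lra).
    replace (e - 1)%Z with (e + (-1))%Z by lia. rewrite P_add, Hsp2.
    simpl powerRZ. field. lra. }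
  rewrite Hhalf.
  set (q := t / sp).
  assert (Hq : q < 2 ^ m).
  { unfold q. apply Rmult_lt_reg_r with sp; auto. unfold Rdiv. rewrite Rmult_assoc, Rinv_l by lra. lra. }
  assert (Hq0 : 0 < q) by (unfold q; apply Rdiv_lt_0_compat; auto;
      eapply Rlt_le_trans; [apply P_pos|apply Ht1]).
  set (s := up (q - 1/2)).
  destruct (archimed (q - 1/2)) as [A1 A2]. fold s in A1, A2.
  assert (Hsq : Rabs (IZR s * sp - t) <= sp / 2).
  { replace (IZR s * sp - t) with ((IZR s - q) * sp) by (unfold q; field; lra).
    rewrite Rabs_mult, (Rabs_right sp) by lra.
    assert (Rabs (IZR s - q) <= 1/2) by (unfold Rabs; destruct Rcase_abs; lra).
    apply Rle_trans with (1/2 * sp); [apply Rmult_le_compat_r; lra | lra]. }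
  assert (Hs0 : (0 <= s)%Z).
  { assert (IZR (-1) < IZR s) by lra. apply lt_IZR in H. lia. }
  assert (Hsm : (s <= 2 ^ Z.of_nat m)%Z).
  { assert (IZR s < IZR (2 ^ Z.of_nat m) + 1) by (rewrite IZR_pow2; lra).
    rewrite <- plus_IZR in H. apply lt_IZR in H. lia. }
  destruct (Z.eq_dec s (2 ^ Z.of_nat m)) as [E|E].
  - exists (powerRZ 2 e). split; [apply float_pow; auto|].
    rewrite Hsp2, <- IZR_pow2, <- E. auto.
  - exists (IZR s * sp). split; auto.
    exists s, e. split; [lia| reflexivity].
Qed.

Lemma round_err rd m y : is_rounding rd -> (1 <= m)%nat ->
  Rabs (rd m y - y) <= Rabs (rd m y) / 2 ^ m.
Proof.
  intros Hrd Hm. destruct (Hrd m y) as [Hf Hmin].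
  assert (Hpm : 0 < 2 ^ m) by (apply pow_lt; lra).
  destruct (Req_dec y 0) as [->|Hy0].
  { assert (H0 : is_float m 0) by (exists 0%Z, 0%Z; split; [simpl; lia| simpl; ring]).
    specialize (Hmin 0 H0). rewrite Rminus_0_r in *. rewrite Rminus_0_l, Rabs_Ropp, Rabs_R0 in Hmin.
    pose proof (Rabs_pos (rd m 0)).
    assert (Rabs (rd m 0) = 0) by lra. rewrite H1. unfold Rdiv; lra. }
  set (t := Rabs y). assert (Ht : 0 < t) by (apply Rabs_pos_lt; auto).
  destruct (exists_exponent t Ht) as [e He].
  set (sg := if Rle_dec 0 y then 1 else -1).
  assert (Hsg : forall z, Rabs (sg * z - y) = Rabs (z - t)).
  { intros z. unfold sg, t. destruct Rle_dec.
    - rewrite (Rabs_right y) by lra. f_equal; ring.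
    - rewrite (Rabs_left y) by lra. rewrite <- Rabs_Ropp. f_equal; ring. }
  assert (Hfl : forall z, is_float m z -> is_float m (sg * z)).
  { intros z Hz. unfold sg. destruct Rle_dec.
    - rewrite Rmult_1_l; auto.
    - replace (-1 * z) with (- z) by ring. apply float_neg; auto. }
  destruct (near_float m t e Hm He) as [z [Hz Hzt]].
  pose proof (Hmin (sg * z) (Hfl z Hz)) as H1. rewrite Hsg in H1.
  pose proof (Hmin (sg * powerRZ 2 (e - 1)) (Hfl _ (float_pow m _ Hm))) as H2.
  rewrite Hsg in H2.
  assert (Hbig : powerRZ 2 (e - 1) <= Rabs (rd m y)).
  { destruct (Rle_dec (powerRZ 2 (e - 1)) (Rabs (rd m y))) as [|Hn]; auto.
    exfalso. destruct He as [He1 He2]. rewrite (Rabs_minus_sym (powerRZ 2 (e-1))), (Rabs_right (t - powerRZ 2 (e - 1))) in H2 by lra.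
    pose proof (Rabs_triang_inv y (rd m y)).
    rewrite (Rabs_minus_sym (rd m y)) in H2. fold t in H. lra. }
  eapply Rle_trans; [apply H1|]. eapply Rle_trans; [apply Hzt|].
  unfold Rdiv. apply Rmult_le_compat_r; [left; apply Rinv_0_lt_compat; auto| auto].
Qed.

Lemma xhat_S f rd Lbar m x n :
  xhat f rd Lbar m x (S n) = rd m (f (xhat f rd Lbar m x n)).
Proof. reflexivity. Qed.

Lemma ebar_S f rd Lbar m x n :
  ebar f rd Lbar m x (S n) =
  Lbar (xhat f rd Lbar m x n) (ebar f rd Lbar m x n) * ebar f rd Lbar m x n
  + Rabs (xhat f rd Lbar m x (S n)) / 2 ^ m.
Proof. reflexivity. Qed.

Lemma xhat_0 f rd Lbar m x : xhat f rd Lbar m x 0 = rd m x.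
Proof. reflexivity. Qed.
Lemma ebar_0 f rd Lbar m x : ebar f rd Lbar m x 0 = Rabs (rd m x) / 2 ^ m.
Proof. reflexivity. Qed.

Lemma inD_between a b u v t : inD a b u -> inD a b v -> Rmin u v <= t <= Rmax u v -> inD a b t.
Proof. unfold inD, Rmin, Rmax; intros; repeat destruct Rle_dec; lra. Qed.

Lemma Rabs_between u v t : Rmin u v <= t <= Rmax u v -> Rabs (t - u) <= Rabs (v - u).
Proof. unfold Rmin, Rmax; intros; repeat destruct Rle_dec; unfold Rabs; repeat destruct Rcase_abs; lra. Qed.

Lemma Lset_lub a b f1 f2 B hh ee z0 :
  (forall y, inD a b y -> deriv_within a b f1 y (f2 y)) ->
  (forall y, inD a b y -> Rabs (f2 y) <= B) -> 0 <= B ->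
  inD a b hh -> 0 <= ee -> inD a b z0 -> Rabs (hh - z0) <= ee ->
  exists l, is_lub (Lset a b f1 hh ee) l /\ l <= Rabs (f1 z0) + 2 * B * ee /\ 0 <= l.
Proof.
  intros Hd HB HB0 Hh He Hz Hhz.
  assert (Hbd : forall w, Lset a b f1 hh ee w -> w <= Rabs (f1 z0) + 2 * B * ee).
  { intros w [y [Hy [Hy2 ->]]].
    pose proof (MVI2 a b f1 f2 z0 y B Hd Hz Hy) as H.
    assert (Rabs (f1 y - f1 z0) <= B * Rabs (y - z0)).
    { apply H. intros t Ht. apply HB. eapply inD_between; [apply Hz|apply Hy|auto]. }
    assert (Rabs (y - z0) <= 2 * ee).
    { replace (y - z0) with ((y - hh) + (hh - z0)) by ring.
      eapply Rle_trans; [apply Rabs_triang|].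
      assert (Rabs (y - hh) <= ee) by (unfold Rabs; destruct Rcase_abs; lra). lra. }
    pose proof (Rabs_triang_inv (f1 y) (f1 z0)).
    assert (B * Rabs (y - z0) <= B * (2 * ee)) by (apply Rmult_le_compat_l; auto). lra. }
  destruct (completeness (Lset a b f1 hh ee)) as [l Hl].
  { exists (Rabs (f1 z0) + 2 * B * ee). intros w Hw; apply Hbd; auto. }
  { exists (Rabs (f1 hh)). exists hh. split; [auto| split; [lra| reflexivity]]. }
  exists l. split; auto. split.
  - apply Hl. intros w Hw; apply Hbd; auto.
  - apply Rle_trans with (Rabs (f1 hh)); [apply Rabs_pos|]. apply Hl. exists hh. split; [auto| split; [lra| reflexivity]].
Qed.

Definition Mb (a b : R) := Rmax (Rabs a) (Rabs b).

Lemma inD_abs a b y : inD a b y -> Rabs y <= Mb a b.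
Proof.
  unfold inD, Mb; intros H. pose proof (Rmax_l (Rabs a) (Rabs b)). pose proof (Rmax_r (Rabs a) (Rabs b)).
  pose proof (Rle_abs b). pose proof (Rle_abs (-a)). rewrite Rabs_Ropp in *.
  unfold Rabs at 1; destruct Rcase_abs; lra.
Qed.

Lemma orbit_inD a b f x n : (forall y, inD a b y -> inD a b (f y)) -> inD a b x -> inD a b (orbit f x n).
Proof. intros Hf Hx; induction n; simpl; auto. Qed.

Lemma err_invariant a b f f1 f2 B Lbar Lmax K rd x m :
  (forall y, inD a b y -> inD a b (f y)) ->
  (forall y, inD a b y -> deriv_within a b f y (f1 y)) ->
  (forall y, inD a b y -> deriv_within a b f1 y (f2 y)) ->
  (forall y, inD a b y -> Rabs (f2 y) <= B) -> 0 <= B -> 0 <= K ->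
  valid_Lbar a b f1 Lbar Lmax K -> is_rounding rd -> inD a b x ->
  (forall n, inD a b (xhat f rd Lbar m x n)) -> (1 <= m)%nat ->
  forall n,
    0 <= ebar f rd Lbar m x n /\
    Rabs (xhat f rd Lbar m x n - orbit f x n) <= ebar f rd Lbar m x n /\
    ebar f rd Lbar m x (S n) <=
      (Rabs (f1 (orbit f x n)) + (2 * B + K) * ebar f rd Lbar m x n) * ebar f rd Lbar m x n
      + Mb a b / 2 ^ m.
Proof.
  intros Hf Hfd Hf1d HB HB0 HK HL Hrd Hx Hh Hm.
  assert (Hpm : 0 < 2 ^ m) by (apply pow_lt; lra).
  assert (base : forall n, 0 <= ebar f rd Lbar m x n /\
    Rabs (xhat f rd Lbar m x n - orbit f x n) <= ebar f rd Lbar m x n).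
  { induction n as [|n [IH1 IH2]].
    - rewrite xhat_0, ebar_0. simpl orbit. split.
      + unfold Rdiv; apply Rmult_le_pos; [apply Rabs_pos| left; apply Rinv_0_lt_compat; auto].
      + apply round_err; auto.
    - set (hh := xhat f rd Lbar m x n) in *. set (ee := ebar f rd Lbar m x n) in *.
      pose proof (orbit_inD a b f x n Hf Hx) as Hxo.
      destruct (Lset_lub a b f1 f2 B hh ee (orbit f x n) Hf1d HB HB0 (Hh n) IH1 Hxo IH2)
        as [l [Hl [Hl2 Hl0]]].
      destruct (HL hh ee l Hl) as [HL1 HL2].
      rewrite ebar_S. fold hh ee. split.
      + apply Rplus_le_le_0_compat.
        * apply Rmult_le_pos; lra.
        * unfold Rdiv; apply Rmult_le_pos; [apply Rabs_pos| left; apply Rinv_0_lt_compat; auto].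
      + rewrite xhat_S. fold hh. simpl orbit.
        replace (rd m (f hh) - f (orbit f x n)) with
          ((rd m (f hh) - f hh) + (f hh - f (orbit f x n))) by ring.
        eapply Rle_trans; [apply Rabs_triang|].
        rewrite Rplus_comm. apply Rplus_le_compat; [| apply round_err; auto].
        pose proof (MVI2 a b f f1 (orbit f x n) hh l Hfd Hxo (Hh n)) as H.
        assert (Hprem : forall t, Rmin (orbit f x n) hh <= t <= Rmax (orbit f x n) hh -> Rabs (f1 t) <= l).
        { intros t Ht. apply Hl. exists t. split; [eapply inD_between; [apply Hxo| apply (Hh n)| auto]|].
          split; [| reflexivity].
          assert (Rabs (t - hh) <= ee).
          { rewrite Rabs_minus_sym in IH2.
            unfold Rmin, Rmax in Ht; unfold Rabs in *; repeat destruct Rcase_abs; repeat destruct Rle_dec; lra. }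
          unfold Rabs in H0; destruct Rcase_abs; lra. }
        eapply Rle_trans; [apply (H Hprem)|].
        apply Rmult_le_compat; auto; apply Rabs_pos. }
  intros n. destruct (base n) as [B1 B2]. split; [auto|split; [auto|]].
  set (hh := xhat f rd Lbar m x n) in *. set (ee := ebar f rd Lbar m x n) in *.
  pose proof (orbit_inD a b f x n Hf Hx) as Hxo.
  destruct (Lset_lub a b f1 f2 B hh ee (orbit f x n) Hf1d HB HB0 (Hh n) B1 Hxo B2)
    as [l [Hl [Hl2 Hl0]]].
  destruct (HL hh ee l Hl) as [HL1 HL2].
  rewrite ebar_S. fold hh ee.
  apply Rplus_le_compat.
  - apply Rmult_le_compat_r; auto.
    assert (Lbar hh ee <= l + K * ee) by (eapply Rle_trans; [apply HL2| apply Rmin_r]). lra.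
  - unfold Rdiv. apply Rmult_le_compat_r; [left; apply Rinv_0_lt_compat; auto|].
    apply inD_abs; auto.
Qed.

Fixpoint Pr (mu : nat -> R) (k n : nat) : R :=
  match n with
  | O => 1
  | S n' => if (k <=? n')%nat then Pr mu k n' * mu n' else 1
  end.

Lemma Pr_S mu k n : (k <= n)%nat -> Pr mu k (S n) = Pr mu k n * mu n.
Proof. intros H. simpl. destruct (Nat.leb_spec k n); [reflexivity| lia]. Qed.

Lemma Pr_nn mu n : Pr mu n n = 1.
Proof.
  destruct n as [|n]; [reflexivity|].
  change (Pr mu (S n) (S n)) with (if (S n <=? n)%nat then Pr mu (S n) n * mu n else 1).
  rewrite (proj2 (Nat.leb_gt (S n) n)) by lia. reflexivity.
Qed.

Lemma Pr_split mu k r n : (k <= r)%nat -> (r < n)%nat ->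
  Pr mu k n = Pr mu k r * mu r * Pr mu (S r) n.
Proof.
  intros H1 H2. induction n as [|n IH]; [lia|].
  destruct (Nat.eq_dec r n) as [->|Hne].
  - rewrite Pr_S by lia. rewrite Pr_nn. ring.
  - rewrite Pr_S by lia. rewrite IH by lia. rewrite (Pr_S mu (S r) n) by lia. ring.
Qed.

Lemma Pr_nonneg mu k n : (forall j, (k <= j < n)%nat -> 0 <= mu j) -> 0 <= Pr mu k n.
Proof.
  intros H. induction n; simpl; [lra|]. destruct (Nat.leb_spec k n); [apply Rmult_le_pos; [apply IHn; intros; apply H; lia| apply H; lia]| lra].
Qed.

Definition Sl (a : nat -> R) (n : nat) := psum (fun j => ln (a j)) n.

Lemma Pr_good mu a d k n : (k <= n)%nat -> 0 <= d ->
  (forall j, (k <= j < n)%nat -> 0 <= mu j /\ 0 < a j /\ mu j <= (1 + d) * a j) ->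
  Pr mu k n <= (1 + d) ^ (n - k) * exp (Sl a n - Sl a k).
Proof.
  intros Hk Hd H. induction n as [|n IH].
  - replace k with 0%nat by lia. simpl. rewrite Rminus_diag, exp_0. lra.
  - destruct (Nat.eq_dec k (S n)) as [->|Hne].
    + rewrite Pr_nn, Nat.sub_diag, Rminus_diag, exp_0. simpl; lra.
    + rewrite Pr_S by lia.
      destruct (H n ltac:(lia)) as [H1 [H2 H3]].
      assert (IH' := IH ltac:(lia) ltac:(intros; apply H; lia)).
      replace (S n - k)%nat with (S (n - k)) by lia.
      replace (Sl a (S n) - Sl a k) with ((Sl a n - Sl a k) + ln (a n)) by (unfold Sl; simpl; ring).
      rewrite exp_plus, exp_ln by auto. simpl pow.
      assert (0 <= Pr mu k n) by (apply Pr_nonneg; intros j Hj; apply (H j); lia).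
      apply Rle_trans with ((1 + d) ^ (n - k) * exp (Sl a n - Sl a k) * ((1 + d) * a n)).
      * apply Rmult_le_compat; auto.
      * right; ring.
Qed.

Lemma last_bad (Bad : nat -> Prop) k n :
  (exists j, (k <= j < n)%nat /\ Bad j) ->
  exists r, (k <= r < n)%nat /\ Bad r /\ forall j, (r < j < n)%nat -> ~ Bad j.
Proof.
  induction n as [|n IH]; intros [j [Hj HB]]; [lia|].
  destruct (classic (Bad n)) as [Hn|Hn].
  - exists n. split; [lia| split; auto]. intros; lia.
  - destruct IH as [r [Hr [HBr Hr2]]].
    { exists j. split; auto. assert (j <> n) by (intro; subst; auto). lia. }
    exists r. split; [lia| split; auto]. intros j' Hj'.
    destruct (Nat.eq_dec j' n) as [->|]; auto. apply Hr2; lia.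
Qed.

Lemma exp_INR_mult (n : nat) x : exp (INR n * x) = exp x ^ n.
Proof.
  induction n; [simpl; rewrite Rmult_0_l, exp_0; auto|].
  rewrite S_INR, Rmult_plus_distr_r, exp_plus, IHn, Rmult_1_l. simpl. ring.
Qed.

Lemma Pr_bound mu a d lp eta beta n :
  0 <= d -> 0 <= lp -> 0 <= eta -> 0 <= beta -> beta * exp eta <= 1 ->
  (forall j, (j < n)%nat -> 0 <= mu j /\ 0 < a j /\ (mu j <= (1 + d) * a j \/ mu j <= beta)) ->
  (forall r n', (r <= n')%nat -> (n' <= n)%nat -> Sl a n' - Sl a r <= lp * INR (n' - r) + eta) ->
  forall k, (k <= n)%nat -> Pr mu k n <= ((1 + d) * exp lp) ^ (n - k) * exp eta.
Proof.
  intros Hd Hlp Heta Hb Hbe.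
  induction n as [n IHn] using (well_founded_induction lt_wf).
  intros Hmu HS k Hk.
  assert (Hq1 : 1 <= (1 + d) * exp lp).
  { assert (1 <= exp lp) by (rewrite <- exp_0; destruct Hlp; [left; apply exp_increasing|right; subst]; auto).
    nra. }
  assert (Hgood : forall k', (k <= k' <= n)%nat -> (forall j, (k' <= j < n)%nat -> mu j <= (1 + d) * a j) ->
            Pr mu k' n <= ((1 + d) * exp lp) ^ (n - k') * exp eta).
  { intros k' Hk' Hg.
    assert (HPg : Pr mu k' n <= (1 + d) ^ (n - k') * exp (Sl a n - Sl a k')).
    { apply Pr_good; [lia| auto|]. intros j Hj; destruct (Hmu j ltac:(lia)) as [? [? _]]; split; [auto| split; [auto| apply Hg; auto]]. }
    eapply Rle_trans; [apply HPg|].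
    rewrite Rpow_mult_distr, <- exp_INR_mult, Rmult_assoc, <- exp_plus.
    apply Rmult_le_compat_l; [apply pow_le; lra|].
    destruct (Rle_dec (Sl a n - Sl a k') (INR (n - k') * lp + eta)) as [Hl|Hl].
    - destruct Hl; [left; apply exp_increasing; auto| right; f_equal; auto].
    - exfalso. apply Hl. rewrite Rmult_comm. apply HS; lia. }
  destruct (classic (exists j, (k <= j < n)%nat /\ ~ (mu j <= (1 + d) * a j))) as [Hex|Hno].
  - destruct (last_bad _ k n Hex) as [r [Hr [HBr Hr2]]].
    rewrite (Pr_split mu k r n) by lia.
    assert (Hmr : mu r <= beta) by (destruct (Hmu r ltac:(lia)) as [_ [_ [?|?]]]; [contradiction| auto]).
    assert (IHr : Pr mu k r <= ((1 + d) * exp lp) ^ (r - k) * exp eta).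
    { apply IHn; [lia| | |lia].
      - intros j Hj; apply Hmu; lia.
      - intros; apply HS; lia. }
    assert (Hg2 : Pr mu (S r) n <= ((1 + d) * exp lp) ^ (n - S r) * exp eta).
    { apply Hgood; [lia|]. intros j Hj. apply NNPP. intro Hc. apply (Hr2 j); [lia| auto]. }
    set (q := (1 + d) * exp lp) in *.
    assert (Hmu0 : 0 <= mu r) by (apply Hmu; lia).
    assert (HP1 : 0 <= Pr mu k r) by (apply Pr_nonneg; intros j Hj; apply Hmu; lia).
    assert (HP2 : 0 <= Pr mu (S r) n) by (apply Pr_nonneg; intros j Hj; apply Hmu; lia).
    assert (He : 0 < exp eta) by apply exp_pos.
    assert (Hqp : 0 <= q ^ (r - k)) by (apply pow_le; lra).
    assert (Hqp2 : 0 <= q ^ (n - S r)) by (apply pow_le; lra).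
    apply Rle_trans with ((q ^ (r - k) * exp eta) * beta * (q ^ (n - S r) * exp eta)).
    { apply Rmult_le_compat; [apply Rmult_le_pos; auto| auto| apply Rmult_le_compat; auto| auto]. }
    replace ((q ^ (r - k) * exp eta) * beta * (q ^ (n - S r) * exp eta)) with
      ((q ^ (r - k) * q ^ (n - S r)) * exp eta * (beta * exp eta)) by ring.
    rewrite <- pow_add.
    assert (Hpw : q ^ (r - k + (n - S r)) <= q ^ (n - k)) by (apply Rle_pow; [auto| lia]).
    assert (0 <= q ^ (r - k + (n - S r))) by (apply pow_le; lra).
    apply Rle_trans with (q ^ (r - k + (n - S r)) * exp eta * 1).
    { apply Rmult_le_compat_l; [apply Rmult_le_pos; lra| auto]. }
    rewrite Rmult_1_r. apply Rmult_le_compat_r; lra.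
  - apply Hgood; [lia|]. intros j Hj. apply NNPP. intro Hc. apply Hno. exists j; split; auto.
Qed.

Lemma psum_ext g h n : (forall k, (k < n)%nat -> g k = h k) -> psum g n = psum h n.
Proof. induction n; simpl; intros H; auto. rewrite IHn by (intros; apply H; lia). rewrite H by lia. auto. Qed.

Lemma psum_le g h n : (forall k, (k < n)%nat -> g k <= h k) -> psum g n <= psum h n.
Proof. induction n; simpl; intros H; [lra|]. apply Rplus_le_compat; [apply IHn; intros; apply H; lia| apply H; lia]. Qed.

Lemma psum_scal c g n : psum (fun k => c * g k) n = c * psum g n.
Proof. induction n; simpl; [ring| rewrite IHn; ring]. Qed.

Lemma geo q n : psum (fun k => q ^ (n - k)) (S n) * (q - 1) = q ^ (S n) - 1.
Proof.
  induction n as [|n IH].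
  - simpl. ring.
  - change (psum (fun k => q ^ (S n - k)) (S (S n))) with
      (psum (fun k => q ^ (S n - k)) (S n) + q ^ (S n - S n)).
    rewrite (psum_ext (fun k => q ^ (S n - k)) (fun k => q * q ^ (n - k))).
    2: { intros k Hk. replace (S n - k)%nat with (S (n - k)) by lia. reflexivity. }
    rewrite psum_scal, Nat.sub_diag.
    replace ((q * psum (fun k => q ^ (n - k)) (S n) + q ^ 0) * (q - 1)) with
      (q * (psum (fun k => q ^ (n - k)) (S n) * (q - 1)) + (q - 1)) by (simpl; ring).
    rewrite IH. simpl. ring.
Qed.

Lemma geo_bound q n : 1 < q -> psum (fun k => q ^ (n - k)) (S n) <= q ^ (S n) / (q - 1).
Proof.
  intros Hq. pose proof (geo q n).
  apply Rmult_le_reg_r with (q - 1); [lra|].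
  unfold Rdiv. rewrite Rmult_assoc, Rinv_l by lra. lra.
Qed.

Lemma err_sum (e mu : nat -> R) c0 :
  (forall j, 0 <= mu j) -> e 0%nat <= c0 -> (forall n, e (S n) <= mu n * e n + c0) ->
  forall n, e n <= c0 * psum (fun k => Pr mu k n) (S n).
Proof.
  intros Hmu H0 HS n. induction n as [|n IH].
  - simpl. lra.
  - change (psum (fun k => Pr mu k (S n)) (S (S n))) with
      (psum (fun k => Pr mu k (S n)) (S n) + Pr mu (S n) (S n)).
    rewrite Pr_nn.
    rewrite (psum_ext (fun k => Pr mu k (S n)) (fun k => mu n * Pr mu k n)).
    2: { intros k Hk. rewrite Pr_S by lia. ring. }
    rewrite psum_scal.
    eapply Rle_trans; [apply HS|].
    assert (mu n * e n <= mu n * (c0 * psum (fun k => Pr mu k n) (S n))) by (apply Rmult_le_compat_l; auto).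
    lra.
Qed.

Lemma minabs_le f x N n : (n <= N)%nat -> minabs f x N <= Rabs (orbit f x n).
Proof.
  induction N; intros H.
  - replace n with 0%nat by lia. simpl. lra.
  - simpl minabs. destruct (Nat.eq_dec n (S N)) as [->|Hne].
    + apply Rmin_r.
    + eapply Rle_trans; [apply Rmin_l| apply IHN; lia].
Qed.

Lemma minabs_pos f x N : (forall n, orbit f x n <> 0) -> 0 < minabs f x N.
Proof.
  intros H. induction N; simpl minabs.
  - apply Rabs_pos_lt. apply (H 0%nat).
  - apply Rmin_glb_lt; auto. apply Rabs_pos_lt. apply (H (S N)).
Qed.

Lemma tol_pos p : 0 < tol p.
Proof.
  unfold tol. assert (0 < powerRZ 10 (- p)) by (apply powerRZ_lt; lra).
  apply Rdiv_lt_0_compat; lra.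
Qed.

Lemma core a b f f1 f2 B Lbar Lmax K rd x m N p d lp eta :
  (forall y, inD a b y -> inD a b (f y)) ->
  (forall y, inD a b y -> deriv_within a b f y (f1 y)) ->
  (forall y, inD a b y -> deriv_within a b f1 y (f2 y)) ->
  (forall y, inD a b y -> Rabs (f2 y) <= B) -> 0 <= B -> 0 <= K ->
  valid_Lbar a b f1 Lbar Lmax K -> is_rounding rd -> inD a b x ->
  (forall n, inD a b (xhat f rd Lbar m x n)) -> (1 <= m)%nat ->
  (forall n, orbit f x n <> 0) -> (forall k, f1 (orbit f x k) <> 0) ->
  0 < d -> 0 <= lp -> 0 <= eta ->
  (forall r n', (r <= n')%nat -> (n' <= N)%nat ->
     Sl (fun j => Rabs (f1 (orbit f x j))) n' - Sl (fun j => Rabs (f1 (orbit f x j))) r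
       <= lp * INR (n' - r) + eta) ->
  let q := (1 + d) * exp lp in
  let G := Mb a b * (exp eta * q ^ (S N) / (q - 1)) in
  (1 + 1 / d) * (2 * B + K) * (G / 2 ^ m) * exp eta <= 1 ->
  (G / 2 ^ m) * (1 + tol p) <= tol p * minabs f x N ->
  good f rd Lbar x N p m.
Proof.
  intros Hf Hfd Hf1d HB HB0 HK HL Hrd Hx Hh Hm Horb Hf1 Hd Hlp Heta HS q G C1 C2.
  set (a0 := fun j => Rabs (f1 (orbit f x j))).
  set (e := fun n => ebar f rd Lbar m x n).
  set (c := 2 * B + K).
  set (mu := fun j => a0 j + c * e j).
  pose proof (err_invariant a b f f1 f2 B Lbar Lmax K rd x m Hf Hfd Hf1d HB HB0 HK HL Hrd Hx Hh Hm) as Hinv.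
  assert (Hpm : 0 < 2 ^ m) by (apply pow_lt; lra).
  assert (Hc : 0 <= c) by (unfold c; lra).
  assert (Hmu0 : forall j, 0 <= mu j).
  { intros j. unfold mu, a0. destruct (Hinv j) as [H1 _]. apply Rplus_le_le_0_compat; [apply Rabs_pos| apply Rmult_le_pos; auto]. }
  assert (Hesum : forall n, e n <= Mb a b / 2 ^ m * psum (fun k => Pr mu k n) (S n)).
  { apply err_sum; auto.
    - unfold e. rewrite ebar_0. unfold Rdiv. apply Rmult_le_compat_r; [left; apply Rinv_0_lt_compat; auto|].
      apply inD_abs. rewrite <- (xhat_0 f rd Lbar m x). auto.
    - intros n. destruct (Hinv n) as [_ [_ H]]. unfold mu, e, a0, c. lra. }
  assert (Hq : 1 < q).
  { unfold q. assert (1 <= exp lp) by (rewrite <- exp_0; destruct Hlp; [left; apply exp_increasing|right; subst]; auto). nra. }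
  assert (HG : forall n, (n <= N)%nat -> e n <= G / 2 ^ m).
  { intros n. induction n as [n IHn] using (well_founded_induction lt_wf). intros HnN.
    assert (Hcls : forall j, (j < n)%nat -> 0 <= mu j /\ 0 < a0 j /\
               (mu j <= (1 + d) * a0 j \/ mu j <= (1 + 1 / d) * c * (G / 2 ^ m))).
    { intros j Hj. split; [auto| split; [unfold a0; apply Rabs_pos_lt; auto|]].
      assert (Hej : e j <= G / 2 ^ m) by (apply IHn; lia).
      assert (He0 : 0 <= e j) by (destruct (Hinv j); auto).
      destruct (Rle_dec (c * e j) (d * a0 j)) as [Hle|Hgt].
      - left. unfold mu. lra.
      - right. unfold mu.
        assert (a0 j <= c * e j / d).
        { apply Rmult_le_reg_l with d; auto. unfold Rdiv.
          replace (d * (c * e j * / d)) with (c * e j) by (field; lra). lra. }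
        assert (c * e j <= c * (G / 2 ^ m)) by (apply Rmult_le_compat_l; auto).
        assert (c * e j / d <= c * (G / 2 ^ m) / d) by (unfold Rdiv; apply Rmult_le_compat_r; [left; apply Rinv_0_lt_compat|]; lra).
        replace ((1 + 1 / d) * c * (G / 2 ^ m)) with (c * (G / 2 ^ m) / d + c * (G / 2 ^ m)) by (field; lra).
        lra. }
    assert (Hb0 : 0 <= (1 + 1 / d) * c * (G / 2 ^ m)).
    { assert (0 <= G).
      { unfold G. apply Rmult_le_pos; [unfold Mb; eapply Rle_trans; [apply Rabs_pos| apply Rmax_l]|].
        unfold Rdiv. apply Rmult_le_pos; [apply Rmult_le_pos; [left; apply exp_pos| apply pow_le; lra]| left; apply Rinv_0_lt_compat; lra]. }
      apply Rmult_le_pos; [apply Rmult_le_pos; auto|]. 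
      - assert (0 < 1 / d) by (apply Rdiv_lt_0_compat; lra). lra.
      - unfold Rdiv; apply Rmult_le_pos; [auto| left; apply Rinv_0_lt_compat; auto]. }
    pose proof (Pr_bound mu a0 d lp eta ((1 + 1 / d) * c * (G / 2 ^ m)) n (Rlt_le _ _ Hd) Hlp Heta Hb0 C1 Hcls
                 (fun r n' H1 H2 => HS r n' H1 ltac:(lia))) as HPr.
    eapply Rle_trans; [apply Hesum|].
    assert (Hsum : psum (fun k => Pr mu k n) (S n) <= exp eta * (q ^ (S N) / (q - 1))).
    { apply Rle_trans with (psum (fun k => exp eta * q ^ (n - k)) (S n)).
      - apply psum_le. intros k Hk. rewrite Rmult_comm. apply HPr. lia.
      - rewrite psum_scal. apply Rmult_le_compat_l; [left; apply exp_pos|].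
        eapply Rle_trans; [apply geo_bound; auto|].
        unfold Rdiv. apply Rmult_le_compat_r; [left; apply Rinv_0_lt_compat; lra|].
        apply Rle_pow; [lra| lia]. }
    unfold G. replace (Mb a b * (exp eta * q ^ S N / (q - 1)) / 2 ^ m) with
      (Mb a b / 2 ^ m * (exp eta * (q ^ S N / (q - 1)))) by (field; lra).
    apply Rmult_le_compat_l; auto.
    unfold Rdiv; apply Rmult_le_pos; [unfold Mb; eapply Rle_trans; [apply Rabs_pos| apply Rmax_l]| left; apply Rinv_0_lt_compat; auto]. }
  intros n Hn.
  destruct (Hinv n) as [He0 [Hval _]].
  pose proof (HG n Hn) as HGn. unfold e in *.
  pose proof (minabs_le f x N n Hn).
  pose proof (tol_pos p).
  assert (Habs : minabs f x N - ebar f rd Lbar m x n <= Rabs (xhat f rd Lbar m x n)).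
  { pose proof (Rabs_triang_inv (orbit f x n) (xhat f rd Lbar m x n)).
    rewrite Rabs_minus_sym in Hval. lra. }
  assert (ebar f rd Lbar m x n * (1 + tol p) <= tol p * minabs f x N).
  { eapply Rle_trans; [| apply C2]. apply Rmult_le_compat_r; lra. }
  assert (tol p * (minabs f x N - ebar f rd Lbar m x n) <= tol p * Rabs (xhat f rd Lbar m x n)) by (apply Rmult_le_compat_l; lra).
  nra.
Qed.

Lemma limsup_exists (u : nat -> R) lo hi : (forall n, lo <= u n <= hi) -> exists l, is_limsup u l.
Proof.
  intros Hb.
  assert (Hv : forall N, {v | is_lub (fun w => exists n, (N <= n)%nat /\ w = u n) v}).
  { intros N. apply completeness.
    - exists hi. intros w [n [_ ->]]. apply Hb.
    - exists (u N). exists N. split; auto. }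
  set (v := fun N => proj1_sig (Hv N)).
  assert (Hvp : forall N, is_lub (fun w => exists n, (N <= n)%nat /\ w = u n) (v N)).
  { intros N. unfold v. destruct (Hv N); auto. }
  destruct (completeness (fun w => exists N, w = - v N)) as [L HL].
  { exists (- lo). intros w [N ->]. apply Ropp_le_contravar.
    apply Rle_trans with (u N); [apply Hb| apply (Hvp N); exists N; split; auto]. }
  { exists (- v 0%nat). exists 0%nat. auto. }
  exists (- L).
  assert (Hge : forall N, - L <= v N).
  { intros N. assert (- v N <= L) by (apply HL; exists N; auto). lra. }
  split.
  - intros eps Heps.
    destruct (classic (exists N, v N <= - L + eps)) as [[N HN]|Hno].
    + exists N. intros n Hn. apply Rle_trans with (v N); auto. apply (Hvp N). exists n; split; auto.
    + exfalso. assert (L <= L - eps); [|lra].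
      apply HL. intros w [N ->].
      assert (~ v N <= - L + eps) by (intro; apply Hno; exists N; auto). lra.
  - intros eps Heps N.
    destruct (classic (exists n, (N <= n)%nat /\ - L - eps <= u n)) as [H|Hno]; auto.
    exfalso. assert (v N <= v N - eps); [|lra].
    apply (Hvp N). intros w [n [Hn1 ->]].
    assert (~ - L - eps <= u n) by (intro; apply Hno; exists n; auto).
    pose proof (Hge N). lra.
Qed.

Lemma limsup_le u w l1 l2 : (forall n, u n <= w n) -> is_limsup u l1 -> is_limsup w l2 -> l1 <= l2.
Proof.
  intros H [U1 U2] [W1 W2].
  destruct (Rle_dec l1 l2) as [|Hnn]; auto. exfalso.
  set (eps := (l1 - l2) / 3).
  assert (Heps : 0 < eps) by (unfold eps; lra).
  destruct (W1 eps Heps) as [N HN].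
  destruct (U2 eps Heps N) as [n [Hn Hu]].
  pose proof (HN n Hn). pose proof (H n). unfold eps in *. lra.
Qed.

Lemma limsup_ge_lim u w lam l : (forall n, w n <= u n) -> Un_cv w lam -> is_limsup u l -> lam <= l.
Proof.
  intros H Hcv [U1 U2].
  destruct (Rle_dec lam l) as [|Hnn]; auto. exfalso.
  set (eps := (lam - l) / 3).
  assert (Heps : 0 < eps) by (unfold eps; lra).
  destruct (U1 eps Heps) as [N1 HN1].
  destruct (Hcv eps Heps) as [N2 HN2].
  pose proof (HN1 (max N1 N2) ltac:(lia)). pose proof (HN2 (max N1 N2) ltac:(lia)).
  pose proof (H (max N1 N2)). unfold R_dist in *. unfold Rabs in *. destruct Rcase_abs; unfold eps in *; lra.
Qed.

Lemma ln_le x y : 0 < x -> x <= y -> ln x <= ln y.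
Proof. intros H1 [H2|H2]; [left; apply ln_increasing; auto| right; subst; auto]. Qed.

Lemma eta_ge_ln al y : 0 < al -> 0 < y -> ln y <= eta al y.
Proof.
  intros Ha Hy. unfold eta. destruct Rle_dec; [lra|]. left. apply ln_increasing; lra.
Qed.

Lemma eta_mono a1 a2 y : 0 < a1 -> a1 <= a2 -> 0 < y -> eta a1 y <= eta a2 y.
Proof.
  intros H1 H2 Hy. unfold eta. destruct (Rle_dec a1 y); destruct (Rle_dec a2 y).
  - lra.
  - apply ln_le; lra.
  - lra.
  - apply ln_le; lra.
Qed.

Lemma eta_bounds al y Lm : 0 < al -> 0 < y -> y <= Lm -> ln al <= eta al y <= ln (Rmax al Lm).
Proof.
  intros Ha Hy HL. unfold eta. destruct Rle_dec; split.
  - apply ln_le; lra.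
  - apply ln_le; [lra|]. eapply Rle_trans; [apply HL| apply Rmax_r].
  - lra.
  - apply ln_le; [lra| apply Rmax_l].
Qed.

Lemma avg_le (g h : nat -> R) n : (forall k, g k <= h k) -> psum g n / INR n <= psum h n / INR n.
Proof.
  intros H. destruct n as [|n].
  - simpl. lra.
  - unfold Rdiv. apply Rmult_le_compat_r; [left; apply Rinv_0_lt_compat, lt_0_INR; lia|].
    apply psum_le; auto.
Qed.

Lemma avg_bounds (g : nat -> R) lo hi n : (forall k, lo <= g k <= hi) ->
  Rmin lo 0 <= psum g n / INR n <= Rmax hi 0.
Proof.
  intros H. destruct n as [|n].
  - simpl. unfold Rdiv. rewrite Rmult_0_l. split; [apply Rmin_r| apply Rmax_r].
  - assert (Hn : 0 < INR (S n)) by (apply lt_0_INR; lia).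
    assert (H1 : psum (fun _ => lo) (S n) <= psum g (S n)) by (apply psum_le; intros; apply H).
    assert (H2 : psum g (S n) <= psum (fun _ => hi) (S n)) by (apply psum_le; intros; apply H).
    assert (Hc : forall c m, psum (fun _ => c) m = c * INR m).
    { intros c m; induction m; simpl psum; [simpl; ring|]. rewrite IHm, S_INR; ring. }
    rewrite Hc in H1, H2. split.
    + apply Rle_trans with lo; [apply Rmin_l|].
      apply Rmult_le_reg_r with (INR (S n)); auto. unfold Rdiv. rewrite Rmult_assoc, Rinv_l by lra. lra.
    + apply Rle_trans with hi; [| apply Rmax_l].
      apply Rmult_le_reg_r with (INR (S n)); auto. unfold Rdiv. rewrite Rmult_assoc, Rinv_l by lra. lra.
Qed.

Lemma lambda_bar_exists (a0 : nat -> R) Lm lam :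
  (forall k, 0 < a0 k <= Lm) ->
  Un_cv (fun n => psum (fun k => ln (a0 k)) n / INR n) lam ->
  exists lb, lam <= lb /\
    exists la : R -> R,
    (forall alpha, 0 < alpha ->
       is_limsup (fun n => psum (fun k => eta alpha (a0 k)) n / INR n) (la alpha)) /\
    (forall eps, 0 < eps -> exists del, 0 < del /\
       forall alpha, 0 < alpha < del -> Rabs (la alpha - lb) < eps).
Proof.
  intros Ha Hcv.
  set (u := fun al n => psum (fun k => eta al (a0 k)) n / INR n).
  assert (Hex : forall al, exists l, 0 < al -> is_limsup (u al) l).
  { intros al. destruct (Rlt_dec 0 al) as [Hal|Hal]; [| exists 0; intros; lra].
    destruct (limsup_exists (u al) (Rmin (ln al) 0) (Rmax (ln (Rmax al Lm)) 0)) as [l Hl].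
    { intros n. unfold u. apply avg_bounds. intros k. apply eta_bounds; auto; apply Ha. }
    exists l; auto. }
  set (la := fun al => proj1_sig (constructive_indefinite_description _ (Hex al))).
  assert (Hla : forall al, 0 < al -> is_limsup (u al) (la al)).
  { intros al Hal. unfold la. destruct (constructive_indefinite_description _ (Hex al)); auto. }
  assert (Hlam : forall al, 0 < al -> lam <= la al).
  { intros al Hal. apply (limsup_ge_lim (u al) (fun n => psum (fun k => ln (a0 k)) n / INR n) lam (la al)); auto.
    intros n. unfold u. apply avg_le. intros k. apply eta_ge_ln; auto; apply Ha. }
  assert (Hmono : forall a1 a2, 0 < a1 -> a1 <= a2 -> la a1 <= la a2).
  { intros a1 a2 H1 H2. apply (limsup_le (u a1) (u a2)); auto; [|apply Hla; lra].
    intros n. unfold u. apply avg_le. intros k. apply eta_mono; auto; apply Ha. }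
  destruct (completeness (fun w => exists al, 0 < al /\ w = - la al)) as [L HL].
  { exists (- lam). intros w [al [Hal ->]]. pose proof (Hlam al Hal). lra. }
  { exists (- la 1). exists 1. split; auto; lra. }
  exists (- L). split.
  { assert (L <= - lam); [| lra]. apply HL. intros w [al [Hal ->]]. pose proof (Hlam al Hal). lra. }
  exists la. split; auto.
  intros eps Heps.
  assert (Hge : forall al, 0 < al -> - L <= la al).
  { intros al Hal. assert (- la al <= L) by (apply HL; exists al; auto). lra. }
  destruct (classic (exists al, 0 < al /\ la al < - L + eps)) as [[al [Hal Hl]]|Hno].
  - exists al. split; auto. intros a1 [Ha1 Ha2].
    pose proof (Hmono a1 al Ha1 ltac:(lra)). pose proof (Hge a1 Ha1).
    rewrite Rabs_right by lra. lra.
  - exfalso. assert (L <= L - eps); [| lra]. apply HL. intros w [al [Hal ->]].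
    assert (~ la al < - L + eps) by (intro; apply Hno; exists al; auto). lra.
Qed.

Lemma psum_ge_term g k n : (forall j, 0 <= g j) -> (k < n)%nat -> g k <= psum g n.
Proof.
  intros H. induction n; intros Hk; [lia|]. simpl.
  destruct (Nat.eq_dec k n) as [->|].
    assert (0 <= psum g n). { clear -H. induction n; simpl; [lra|]. pose proof (H n); lra. } lra.
  - pose proof (H n). assert (g k <= psum g n) by (apply IHn; lia). lra.
Qed.

Lemma conv_bound (Sf : nat -> R) lam : Un_cv (fun n => Sf n / INR n) lam -> Sf 0%nat = 0 ->
  forall c, 0 < c -> exists C0, 0 <= C0 /\ forall n, Rabs (Sf n - lam * INR n) <= c * INR n + C0.
Proof.
  intros Hcv H0 c Hc. destruct (Hcv c Hc) as [n1 Hn1].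
  exists (psum (fun k => Rabs (Sf k - lam * INR k)) n1). split.
  { clear. induction n1; simpl; [lra|]. pose proof (Rabs_pos (Sf n1 - lam * INR n1)). lra. }
  intros n. assert (0 <= INR n) by apply pos_INR.
  assert (0 <= psum (fun k => Rabs (Sf k - lam * INR k)) n1).
  { clear. induction n1; simpl; [lra|]. pose proof (Rabs_pos (Sf n1 - lam * INR n1)). lra. }
  destruct (le_lt_dec n1 n) as [Hle|Hlt].
  - destruct n as [|n].
    + simpl. rewrite H0. replace (0 - lam * 0) with 0 by ring. rewrite Rabs_R0. lra.
    + specialize (Hn1 (S n) ltac:(lia)). unfold R_dist in Hn1.
      assert (Hp : 0 < INR (S n)) by (apply lt_0_INR; lia).
      replace (Sf (S n) - lam * INR (S n)) with (INR (S n) * (Sf (S n) / INR (S n) - lam)) by (field; lra).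
      rewrite Rabs_mult, Rabs_right by lra.
      assert (INR (S n) * Rabs (Sf (S n) / INR (S n) - lam) <= INR (S n) * c) by (apply Rmult_le_compat_l; lra).
      lra.
  - assert (Rabs (Sf n - lam * INR n) <= psum (fun k => Rabs (Sf k - lam * INR k)) n1).
    { apply (psum_ge_term (fun k => Rabs (Sf k - lam * INR k))); auto. intros; apply Rabs_pos. }
    assert (0 <= c * INR n) by (apply Rmult_le_pos; lra). lra.
Qed.

Lemma nat_large R0 : exists N3, forall N, (N3 <= N)%nat -> R0 <= INR N.
Proof.
  destruct (INR_unbounded R0) as [n Hn]. exists n. intros N HN. apply le_INR in HN. lra.
Qed.

Lemma to_nat_bounds r : let m := S (Z.to_nat (up r)) in r <= INR m /\ INR m <= Rmax 0 (r + 1) + 1.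
Proof.
  intros m. unfold m. rewrite S_INR, INR_IZR_INZ, ZifyInst.of_nat_to_nat_eq.
  destruct (archimed r) as [H1 H2].
  destruct (Z.max_spec 0 (up r)) as [[Hz ->]|[Hz ->]].
  - split; [lra|]. pose proof (Rmax_r 0 (r + 1)). lra.
  - assert (IZR (up r) <= 0) by (apply IZR_le; lia). split; [lra|].
    pose proof (Rmax_l 0 (r + 1)). lra.
Qed.

Lemma pow2_ge X (m : nat) : 0 < X -> ln X / ln 2 <= INR m -> X <= 2 ^ m.
Proof.
  intros HX Hm. pose proof ln2_pos.
  rewrite <- Rpower_pow by lra. unfold Rpower.
  rewrite <- (exp_ln X) at 1 by auto.
  assert (ln X <= INR m * ln 2).
  { apply Rmult_le_reg_r with (/ ln 2); [apply Rinv_0_lt_compat; lra|].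
    rewrite Rmult_assoc, Rinv_r by lra. unfold Rdiv in Hm. lra. }
  destruct H0; [left; apply exp_increasing; auto| right; f_equal; auto].
Qed.

Lemma ln2_lt_1 : ln 2 < 1.
Proof.
  rewrite <- (ln_exp 1). apply ln_increasing; [lra|].
  pose proof (exp_ineq1 1 ltac:(lra)). lra.
Qed.

Lemma asympt a b f f1 f2 B Lbar Lmax K rd x p lam :
  a < b ->
  (forall y, inD a b y -> inD a b (f y)) ->
  (forall y, inD a b y -> deriv_within a b f y (f1 y)) ->
  (forall y, inD a b y -> deriv_within a b f1 y (f2 y)) ->
  (forall y, inD a b y -> Rabs (f2 y) <= B) -> 0 <= B -> 0 <= K ->
  valid_Lbar a b f1 Lbar Lmax K -> is_rounding rd -> inD a b x ->
  (forall m n, (1 <= m)%nat -> inD a b (xhat f rd Lbar m x n)) ->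
  (forall n, orbit f x n <> 0) -> (forall k, f1 (orbit f x k) <> 0) ->
  Un_cv (fun N => ld (minabs f x N) / INR N) 0 ->
  Un_cv (fun n => psum (fun k => ln (Rabs (f1 (orbit f x k)))) n / INR n) lam ->
  forall tau, 0 < tau -> exists N0, forall N, (N0 <= N)%nat ->
    exists m, (1 <= m)%nat /\ good f rd Lbar x N p m /\ INR m <= (Rmax 0 lam / ln 2 + tau) * INR N.
Proof.
  intros Hab Hf Hfd Hf1d HB HB0 HK HL Hrd Hx Hh Horb Hf1 Hst Hcv tau Htau.
  pose proof ln2_pos as Hl2. pose proof ln2_lt_1 as Hl21.
  set (e1 := tau * ln 2 / 8).
  assert (He1 : 0 < e1) by (unfold e1; apply Rdiv_lt_0_compat; [apply Rmult_lt_0_compat|]; lra).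
  set (d := e1). assert (Hd : 0 < d) by exact He1. set (lp := Rmax 0 lam).
  assert (Hlp : 0 <= lp) by apply Rmax_l.
  assert (Hlamlp : lam <= lp) by apply Rmax_r.
  set (a0 := fun j => Rabs (f1 (orbit f x j))).
  destruct (conv_bound (Sl a0) lam Hcv eq_refl (e1 / 2) ltac:(lra)) as [C0 [HC0 HC]].
  destruct (Hst e1 He1) as [N2 HN2].
  set (t := tol p). assert (Ht : 0 < t) by apply tol_pos.
  set (A := (1 + 1 / d) * (2 * B + K + 1)).
  assert (Hd1 : 0 < 1 / d) by (apply Rdiv_lt_0_compat; lra).
  assert (HA : 0 < A) by (unfold A; apply Rmult_lt_0_compat; lra).
  set (Bc := (1 + t) / t). assert (HBc : 0 < Bc) by (unfold Bc; apply Rdiv_lt_0_compat; lra).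
  set (M := Mb a b).
  assert (HM : 0 < M).
  { unfold M, Mb. destruct (Req_dec a 0).
    - eapply Rlt_le_trans; [| apply Rmax_r]. apply Rabs_pos_lt. lra.
    - eapply Rlt_le_trans; [| apply Rmax_l]. apply Rabs_pos_lt. auto. }
  set (K1 := M / d * (A + Bc)).
  assert (HK1 : 0 < K1) by (unfold K1; apply Rmult_lt_0_compat; [apply Rdiv_lt_0_compat|]; lra).
  set (Kc := ln K1 + 4 * C0 + d + lp).
  destruct (nat_large ((2 * Rabs Kc / ln 2 + 6) / tau)) as [N3 HN3].
  exists (max (max N2 N3) 1). intros N HN.
  assert (HNpos : 1 <= INR N) by (replace 1 with (INR 1) by reflexivity; apply le_INR; lia).
  assert (HN3' : (2 * Rabs Kc / ln 2 + 6) / tau <= INR N) by (apply HN3; lia).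
  assert (HtauN : 2 * Rabs Kc / ln 2 + 6 <= tau * INR N).
  { apply Rmult_le_reg_r with (/ tau); [apply Rinv_0_lt_compat; lra|].
    replace (tau * INR N * / tau) with (INR N) by (field; lra). exact HN3'. }
  set (eta := e1 * INR N + 2 * C0).
  assert (Heta : 0 <= eta) by (unfold eta; nra).
  set (q := (1 + d) * exp lp).
  set (G := M * (exp eta * q ^ (S N) / (q - 1))).
  set (mn := minabs f x N).
  assert (Hmn : 0 < mn) by (apply minabs_pos; auto).
  set (X := G * (A * exp eta + Bc / mn)).
  set (m := S (Z.to_nat (up (ln X / ln 2)))).
  assert (Hexpl : 1 <= exp lp) by (rewrite <- exp_0; destruct Hlp as [Hlp|Hlp]; [left; apply exp_increasing; auto| right; rewrite Hlp; auto]).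
  assert (Hq1 : d <= q - 1) by (unfold q; nra).
  assert (Hqpos : 0 < q) by (unfold q; nra).
  assert (Hee : 1 <= exp eta) by (rewrite <- exp_0; destruct Heta as [He|He]; [left; apply exp_increasing; auto| right; rewrite He; auto]).
  assert (HG : 0 < G).
  { unfold G. apply Rmult_lt_0_compat; auto. unfold Rdiv. apply Rmult_lt_0_compat; [apply Rmult_lt_0_compat; [lra| apply pow_lt; lra]| apply Rinv_0_lt_compat; lra]. }
  assert (HBmn : 0 < Bc / mn) by (apply Rdiv_lt_0_compat; lra).
  assert (HX : 0 < X) by (unfold X; apply Rmult_lt_0_compat; [auto| nra]).
  destruct (to_nat_bounds (ln X / ln 2)) as [Hm1 Hm2]. fold m in Hm1, Hm2.
  assert (H2m : X <= 2 ^ m) by (apply pow2_ge; auto).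
  assert (Hpm : 0 < 2 ^ m) by (apply pow_lt; lra).
  assert (Hinvmn : / mn <= exp (e1 * INR N * ln 2)).
  { specialize (HN2 N ltac:(lia)). unfold R_dist in HN2. rewrite Rminus_0_r in HN2.
    assert (Hld : - e1 < ld mn / INR N) by (unfold mn; unfold Rabs in HN2; destruct Rcase_abs; lra).
    assert (Hld2 : - e1 * INR N < ld mn).
    { apply Rmult_lt_compat_r with (r := INR N) in Hld; [|lra].
      replace (ld mn / INR N * INR N) with (ld mn) in Hld by (field; lra). lra. }
    unfold ld in Hld2.
    assert (Hlnmn : - (e1 * INR N * ln 2) < ln mn).
    { apply Rmult_lt_compat_r with (r := ln 2) in Hld2; [|lra].
      replace (ln mn / ln 2 * ln 2) with (ln mn) in Hld2 by (field; lra). lra. }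
    apply exp_increasing in Hlnmn. rewrite exp_ln in Hlnmn by auto. rewrite exp_Ropp in Hlnmn.
    left. rewrite <- (Rinv_inv (exp _)). apply Rinv_lt_contravar; auto.
    apply Rmult_lt_0_compat; [apply Rinv_0_lt_compat, exp_pos| auto]. }
  exists m. split; [unfold m; lia|]. split.
  - apply (core a b f f1 f2 B Lbar Lmax K rd x m N p d lp eta); auto; try lra.
    + intros n; apply Hh; unfold m; lia.
    + unfold m; lia.
    + intros r n' Hr Hn'.
      pose proof (HC n') as Hc1. pose proof (HC r) as Hc2.
      rewrite minus_INR by auto.
      assert (INR r <= INR n') by (apply le_INR; auto).
      assert (INR n' <= INR N) by (apply le_INR; auto).
      assert (lam * (INR n' - INR r) <= lp * (INR n' - INR r)) by (apply Rmult_le_compat_r; lra).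
      unfold Rabs in Hc1, Hc2. destruct (Rcase_abs (Sl a0 n' - lam * INR n')); destruct (Rcase_abs (Sl a0 r - lam * INR r));
      unfold eta; fold a0; nra.
    + change (Mb a b * (exp eta * ((1 + d) * exp lp) ^ S N / ((1 + d) * exp lp - 1))) with G.
      assert (Hc : (1 + 1 / d) * (2 * B + K) * G * exp eta <= X).
      { unfold X. assert (0 <= G * (Bc / mn)) by (apply Rmult_le_pos; lra).
        assert ((1 + 1 / d) * (2 * B + K) <= A) by (unfold A; nra).
        assert (0 <= G * exp eta) by (apply Rmult_le_pos; lra).
        assert ((1 + 1 / d) * (2 * B + K) * (G * exp eta) <= A * (G * exp eta)) by (apply Rmult_le_compat_r; lra).
        replace (G * (A * exp eta + Bc / mn)) with (A * (G * exp eta) + G * (Bc / mn)) by ring.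
        replace ((1 + 1 / d) * (2 * B + K) * G * exp eta) with ((1 + 1 / d) * (2 * B + K) * (G * exp eta)) by ring.
        lra. }
      replace ((1 + 1 / d) * (2 * B + K) * (G / 2 ^ m) * exp eta) with
        ((1 + 1 / d) * (2 * B + K) * G * exp eta / 2 ^ m) by (field; lra).
      apply Rmult_le_reg_r with (2 ^ m); auto.
      replace ((1 + 1 / d) * (2 * B + K) * G * exp eta / 2 ^ m * 2 ^ m) with ((1 + 1 / d) * (2 * B + K) * G * exp eta) by (field; lra).
      lra.
    + change (Mb a b * (exp eta * ((1 + d) * exp lp) ^ S N / ((1 + d) * exp lp - 1))) with G. fold mn t.
      apply Rmult_le_reg_r with (2 ^ m / (t * mn)).
      { apply Rdiv_lt_0_compat; nra. }
      replace (G / 2 ^ m * (1 + t) * (2 ^ m / (t * mn))) with (G * (Bc / mn)) by (unfold Bc; field; repeat split; lra).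
      replace (t * mn * (2 ^ m / (t * mn))) with (2 ^ m) by (field; lra).
      apply Rle_trans with X; auto. unfold X. assert (0 <= G * (A * exp eta)) by (apply Rmult_le_pos; [lra| apply Rmult_le_pos; lra]).
      replace (G * (A * exp eta + Bc / mn)) with (G * (A * exp eta) + G * (Bc / mn)) by ring. lra.
  -
    assert (HXb : X <= K1 * exp (eta + (d + lp) * INR (S N) + eta + e1 * INR N * ln 2)).
    { assert (Hqe : q ^ S N <= exp ((d + lp) * INR (S N))).
      { rewrite Rmult_comm, exp_INR_mult. apply pow_incr. split; [lra|].
        unfold q. rewrite exp_plus. apply Rmult_le_compat_r; [lra|].
        pose proof (exp_ineq1_le d). lra. }
      assert (Hiq : / (q - 1) <= / d) by (apply Rinv_le_contravar; lra).
      assert (Hsum : A * exp eta + Bc / mn <= (A + Bc) * exp (eta + e1 * INR N * ln 2)).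
      { rewrite exp_plus.
        assert (1 <= exp (e1 * INR N * ln 2)) by (rewrite <- exp_0; left; apply exp_increasing; apply Rmult_lt_0_compat; [apply Rmult_lt_0_compat|]; lra).
        assert (Bc / mn <= Bc * exp (e1 * INR N * ln 2)) by (unfold Rdiv; apply Rmult_le_compat_l; lra).
        set (E3 := exp (e1 * INR N * ln 2)) in *.
        assert (A * exp eta * 1 <= A * exp eta * E3) by (apply Rmult_le_compat_l; nra).
        assert (Bc * 1 * E3 <= Bc * exp eta * E3) by (apply Rmult_le_compat_r; [lra| apply Rmult_le_compat_l; lra]).
        replace ((A + Bc) * (exp eta * E3)) with (A * exp eta * E3 + Bc * exp eta * E3) by ring.
        lra. }
      assert (HGb : G <= M * (exp eta * exp ((d + lp) * INR (S N)) * / d)).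
      { unfold G, Rdiv. apply Rmult_le_compat_l; [lra|].
        apply Rmult_le_compat; [apply Rmult_le_pos; [left; apply exp_pos| apply pow_le; lra]| left; apply Rinv_0_lt_compat; lra| |auto].
        apply Rmult_le_compat_l; [left; apply exp_pos| auto]. }
      assert (HS0 : 0 <= A * exp eta + Bc / mn) by (pose proof (exp_pos eta); nra).
      apply Rle_trans with (M * (exp eta * exp ((d + lp) * INR (S N)) * / d) * ((A + Bc) * exp (eta + e1 * INR N * ln 2))).
      { unfold X. apply Rmult_le_compat; auto; lra. }
      right. unfold K1. rewrite !exp_plus. field. lra. }
    assert (HlnX : ln X <= Kc + (lp + 4 * e1) * INR N).
    { eapply Rle_trans; [apply ln_le; [auto| apply HXb]|].
      rewrite ln_mult, ln_exp by (auto || apply exp_pos).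
      unfold Kc, eta, d. rewrite S_INR.
      assert (e1 * INR N * ln 2 <= e1 * INR N) by (rewrite Rmult_assoc; apply Rmult_le_compat_l; [lra|]; nra).
      nra. }
    assert (Hdiv : ln X / ln 2 <= Kc / ln 2 + lp / ln 2 * INR N + tau / 2 * INR N).
    { unfold Rdiv. apply Rmult_le_reg_r with (ln 2); auto.
      replace ((Kc * / ln 2 + lp * / ln 2 * INR N + tau * / 2 * INR N) * ln 2) with
        (Kc + lp * INR N + tau * ln 2 / 2 * INR N) by (field; lra).
      replace (ln X * / ln 2 * ln 2) with (ln X) by (field; lra).
      unfold e1 in HlnX. lra. }
    assert (HKc : Kc / ln 2 <= Rabs Kc / ln 2) by (unfold Rdiv; apply Rmult_le_compat_r; [left; apply Rinv_0_lt_compat; lra| apply Rle_abs]).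
    assert (HKc0 : 0 <= Rabs Kc / ln 2) by (apply Rdiv_le_0_compat_alt || (unfold Rdiv; apply Rmult_le_pos; [apply Rabs_pos| left; apply Rinv_0_lt_compat; lra])).
    assert (0 <= lp / ln 2 * INR N) by (unfold Rdiv; apply Rmult_le_pos; [apply Rmult_le_pos; [lra| left; apply Rinv_0_lt_compat; lra]| lra]).
    rewrite Rmult_plus_distr_r. fold lp.
    unfold Rmax at 1 in Hm2. destruct Rle_dec; lra.
Qed.

Lemma least_nat (P : nat -> Prop) m : P m -> exists m0, P m0 /\ (m0 <= m)%nat /\ forall m', (m' < m0)%nat -> ~ P m'.
Proof.
  induction m as [m IH] using (well_founded_induction lt_wf). intros Hm.
  destruct (classic (exists m', (m' < m)%nat /\ P m')) as [[m' [Hlt Hm']]|Hno].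
  - destruct (IH m' Hlt Hm') as [m0 [H1 [H2 H3]]]. exists m0. split; auto. split; [lia| auto].
  - exists m. split; auto. split; auto. intros m' Hm' Hc. apply Hno. exists m'; auto.
Qed.

Lemma a0_le_Lmax a b f1 Lbar Lmax K c : valid_Lbar a b f1 Lbar Lmax K -> inD a b c ->
  Rabs (f1 c) <= Lmax.
Proof.
  intros HL Hc.
  assert (Hlub : is_lub (Lset a b f1 c 0) (Rabs (f1 c))).
  { split.
    - intros w [y [Hy [Hy2 ->]]]. replace y with c by lra. lra.
    - intros w Hw. apply Hw. exists c. split; [auto| split; [lra| reflexivity]]. }
  destruct (HL c 0 _ Hlub) as [H1 H2].
  eapply Rle_trans; [apply H1|]. eapply Rle_trans; [apply H2| apply Rmin_l].
Qed.

Theorem mainTheorem10 (a b : R) (f f1 f2 : R -> R) (Lbar : R -> R -> R)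
  (Lmax K : R) (rd : nat -> R -> R) (x : R) :
  a < b ->
  (forall y, inD a b y -> inD a b (f y)) ->
  (forall y, inD a b y -> deriv_within a b f y (f1 y)) ->
  (forall y, inD a b y -> deriv_within a b f1 y (f2 y)) ->
  (forall y, inD a b y -> cont_within a b f2 y) ->
  (exists B, forall y, inD a b y -> Rabs (f2 y) <= B) ->
  0 <= Lmax -> 0 <= K -> valid_Lbar a b f1 Lbar Lmax K ->
  is_rounding rd ->
  (exists q : Q, x = Q2R q) -> inD a b x ->
  (forall m n, (1 <= m)%nat -> inD a b (xhat f rd Lbar m x n)) ->
  standing f x ->
  lyap_exists f f1 x ->
  exists lb, is_lambda_bar f f1 x lb /\
    forall eps, 0 < eps -> exists p0 : Z, forall p : Z, (p0 <= p)%Z ->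
      sigma_le f rd Lbar x p (Rmax 0 lb / ln 2 + eps).
Proof.
  intros Hab Hf Hfd Hf1d Hf2c [B HB] HLmax HK HL Hrd _ Hx Hh [Horb Hst] [Hf1 [lam Hcv]].
  assert (HB0 : 0 <= B) by (eapply Rle_trans; [apply Rabs_pos| apply (HB b); unfold inD; lra]).
  destruct (lambda_bar_exists (fun k => Rabs (f1 (orbit f x k))) Lmax lam) as [lb [Hlamlb [la [Hla1 Hla2]]]].
  { intros k. split; [apply Rabs_pos_lt; auto|]. apply (a0_le_Lmax a b f1 Lbar Lmax K); auto.
    apply orbit_inD; auto. }
  { exact Hcv. }
  exists lb. split; [exists la; split; [exact Hla1| exact Hla2]|].
  intros eps Heps. exists 0%Z. intros p _ del Hdel.
  destruct (asympt a b f f1 f2 B Lbar Lmax K rd x p lam Hab Hf Hfd Hf1d HB HB0 HK HL Hrd Hx Hh Horb Hf1 Hst Hcv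
              (eps + del) ltac:(lra)) as [N0 HN0].
  exists (max N0 1). intros N HN.
  destruct (HN0 N ltac:(lia)) as [m [Hm1 [Hgood Hbound]]].
  destruct (least_nat (fun m => (1 <= m)%nat /\ good f rd Lbar x N p m) m (conj Hm1 Hgood))
    as [mm [[Hmm1 Hmm2] [Hmmle Hmin]]].
  exists mm. split.
  - split; auto. split; auto. intros m' H1 H2 Hc. apply (Hmin m' H2). split; auto.
  - assert (HNp : 0 < INR N) by (apply lt_0_INR; lia).
    assert (INR mm <= INR m) by (apply le_INR; auto).
    pose proof ln2_pos.
    assert (Rmax 0 lam / ln 2 <= Rmax 0 lb / ln 2).
    { unfold Rdiv. apply Rmult_le_compat_r; [left; apply Rinv_0_lt_compat; lra|].
      unfold Rmax; repeat destruct Rle_dec; lra. }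
    apply Rmult_le_reg_r with (INR N); auto.
    replace (INR mm / INR N * INR N) with (INR mm) by (field; lra).
    nra.
Qed.
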